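(* Let $r\ge1$. There exists a constant $C_r$ such that the following holds. Let $n\ge 3r$, $\lambda\vdash n$ with $n-\lambda_1=r$, and $\sigma\in\mathfrak{S}_n$ with $f:=f_1(\sigma)\ge 2r$; let $\alpha$ be the cycle lengths of $\sigma$ listed in weakly increasing order. Let $\mu\vdash f$ with $\mu\subset\lambda$, let $K=|\lambda^*\setminus\mu^*|$ and assume $K\ge2$. Let $s=(s_i)_{i\ge2}$ be nonnegative integers with $\sum_{i\ge2} i s_i=K$. Let $S(\lambda,\alpha,\mu,s)$ be the set of ribbon tableaux of shape $\lambda$ and weight $\alpha$ in which the ribbons of length $1$ fill exactly the cells of $\mu$, and the cells of $\lambda^*\setminus\mu^*$ are covered by exactly $s_i$ ribbons of length $i$ for each $i\ge2$. Then $$|S(\lambda,\alpha,\mu,s)|\le C_r\, f^{r-K}\,G(\sigma)^K\le C_r\,M(\sigma)^r.$$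
   Context: A ribbon (rim hook) is a connected skew Young diagram containing no $2\times2$ square; its height is its number of rows minus one. A ribbon tableau of shape $\lambda\vdash n$ and weight $\alpha=(\alpha_1,\dots,\alpha_p)$ (a sequence of positive integers summing to $n$) is a chain of Young diagrams $\emptyset=\lambda^{(0)}\subset\lambda^{(1)}\subset\cdots\subset\lambda^{(p)}=\lambda$ such that each $\lambda^{(i)}\setminus\lambda^{(i-1)}$ is a ribbon with $\alpha_i$ cells; its height is the sum of the heights of its ribbons. $\lambda_1$ is the first row length of $\lambda$ and $\lambda^*=(\lambda_2,\lambda_3,\dots)$; for $\mu\subset\lambda$, $\lambda^*\setminus\mu^*$ is the set of cells of $\lambda\setminus\mu$ not in the first row. $f_i(\sigma)$ is the number of $i$-cycles of $\sigma$, $M(\sigma)=\max_{i\ge1}f_i(\sigma)^{1/i}$ and $G(\sigma)=\max_{i\ge2}f_i(\sigma)^{1/i}$. *)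

(* Defs.v *)
From HB Require Import structures.
From mathcomp Require Import all_boot all_order all_algebra all_fingroup.
From mathcomp Require Import boolp reals exp.
Set Implicit Arguments. Unset Strict Implicit. Unset Printing Implicit Defensive.
Import Order.TTheory GRing.Theory Num.Theory.

Definition is_partition (n : nat) (lam : seq nat) : bool :=
  [&& sorted geq lam, all (fun x => 0 < x) lam & sumn lam == n].

Definition subpart (mu lam : seq nat) : bool :=
  all (fun i => nth 0 mu i <= nth 0 lam i) (iota 0 (size mu)).

Section Cells.
Variable n : nat.
Definition cell := ('I_n * 'I_n)%type.

(* Young diagram of lam, cells (row, column), 0-indexed. *)
Definition diagram (lam : seq nat) : {set cell} :=
  [set c : cell | (c.2 : nat) < nth 0 lam c.1].

Definition inD (D : {set cell}) (i j : nat) : bool :=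
  [exists c in D, ((c.1 : nat) == i) && ((c.2 : nat) == j)].

Definition is_young (D : {set cell}) : bool :=
  [forall c in D, forall d : cell,
     ((d.1 <= c.1) && (d.2 <= c.2))%N ==> (d \in D)].

Definition adjacent (a b : cell) : bool :=
  (((a.1 : nat) == b.1) && (((a.2 : nat) == b.2.+1) || ((b.2 : nat) == a.2.+1)))
  || (((a.2 : nat) == b.2) && (((a.1 : nat) == b.1.+1) || ((b.1 : nat) == a.1.+1))).

Definition connected_cells (D : {set cell}) : bool :=
  (D != set0) &&
  [forall x in D, forall y in D,
     connect (fun a b => [&& a \in D, b \in D & adjacent a b]) x y].

Definition no_square (D : {set cell}) : bool :=
  [forall c in D, ~~ [&& inD D c.1 c.2.+1, inD D c.1.+1 c.2 & inD D c.1.+1 c.2.+1]].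

Definition is_ribbon (D : {set cell}) : bool := connected_cells D && no_square D.

Definition ribbon_of (p : nat) (T : {ffun 'I_p.+1 -> {set cell}}) (i : nat)
  : {set cell} := T (inord i.+1) :\: T (inord i).

Definition is_ribbon_tableau (lam al : seq nat)
  (T : {ffun 'I_(size al).+1 -> {set cell}}) : bool :=
  [&& T ord0 == set0, T ord_max == diagram lam,
      [forall i : 'I_(size al).+1, is_young (T i)] &
      [forall i : 'I_(size al),
         [&& T (inord i) \subset T (inord i.+1),
             is_ribbon (ribbon_of T i) &
             #|ribbon_of T i| == nth 0 al i]]].

(* cells of lam^* \ mu^*: cells of lam \ mu not in the first row *)
Definition lower_skew (lam mu : seq nat) : {set cell} :=
  [set c in diagram lam :\: diagram mu | (c.1 : nat) != 0].

Definition S_set (lam al mu : seq nat) (s : nat -> nat)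
  : {set {ffun 'I_(size al).+1 -> {set cell}}} :=
  [set T | [&& @is_ribbon_tableau lam al T,
     (\bigcup_(i < size al | nth 0 al i == 1%N) ribbon_of T i) == diagram mu &
     `[< forall i : nat, (2 <= i)%N ->
        #|[set j : 'I_(size al) | (nth 0 al j == i) &&
              (ribbon_of T j :&: lower_skew lam mu != set0)]| = s i >]]].
End Cells.

Definition fcyc (n : nat) (sigma : {perm 'I_n}) (i : nat) : nat :=
  #|[set c in porbits sigma | #|c| == i]|.

Definition cycle_type_inc (n : nat) (sigma : {perm 'I_n}) : seq nat :=
  sort leq [seq #|pred_of_set c| | c : {set 'I_n} <- enum (porbits sigma)].

Local Open Scope ring_scope.
(* M(sigma) = max_{i>=1} f_i^{1/i}, G(sigma) = max_{i>=2} f_i^{1/i};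
   f_i = 0 for i > n, and all terms are >= 0, so the max over 1..n (resp. 2..n)
   with default 0 is the same. *)
Definition Mstat (R : realType) (n : nat) (sigma : {perm 'I_n}) : R :=
  \big[Num.max/0]_(1 <= i < n.+1) ((fcyc sigma i)%:R `^ (i%:R)^-1).
Definition Gstat (R : realType) (n : nat) (sigma : {perm 'I_n}) : R :=
  \big[Num.max/0]_(2 <= i < n.+1) ((fcyc sigma i)%:R `^ (i%:R)^-1).

(* Main.v *)
Require Import Defs.
From HB Require Import structures.
From mathcomp Require Import all_boot all_order all_algebra all_fingroup.
From mathcomp Require Import boolp reals exp.
From mathcomp Require Import zify ring.
Import Order.TTheory GRing.Theory Num.Theory.

Lemma sum_lt n m : (\sum_(j < n) (j < m : nat))%N = minn m n.
Proof.
elim: n => [|n IH]; first by rewrite big_ord0; lia.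
rewrite big_ord_recr /= IH; case: (ltnP n m) => h; lia.
Qed.

Lemma card_setP (T : finType) (P : pred T) : #|[set x | P x]| = (\sum_(x : T) (P x : nat))%N.
Proof.
rewrite -sum1_card big_mkcond; apply: eq_bigr => i _; rewrite !inE; by case: (P i).
Qed.

Lemma card_set_lt n m : #|[set j : 'I_n | (j < m)%N]| = minn m n.
Proof. by rewrite card_setP sum_lt. Qed.

Lemma nth_le_sumn (s : seq nat) i : (nth 0 s i <= sumn s)%N.
Proof. elim: s i => [|x s IH] [|i] //=; [lia| have := IH i; lia]. Qed.

Lemma size_le_sumn (s : seq nat) : all (fun x => 0 < x)%N s -> (size s <= sumn s)%N.
Proof. elim: s => [|x s IH] //= /andP[hx hs]; have := IH hs; lia. Qed.

Lemma sum_nth (s : seq nat) n : (size s <= n)%N -> (\sum_(i < n) nth 0 s i)%N = sumn s.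
Proof.
rewrite -(big_mkord xpredT (fun i => nth 0 s i)).
elim: s n => [|x s IH] n.
  move=> _; rewrite big1_seq // => i _; by rewrite nth_nil.
case: n => [//|n].
move=> h; by rewrite big_nat_recl //= -(IH n).
Qed.

Lemma bin_le_exp n m : ('C(n, m) <= n ^ m)%N.
Proof.
have h1 : ('C(n, m) <= n ^_ m)%N by rewrite -bin_ffact leq_pmulr ?fact_gt0.
apply: leq_trans h1 _.
elim: m n => [n|m IH n]; first by [].
rewrite ffactnS expnS leq_mul //; apply: leq_trans (IH _) _; case: m {IH} => [|m]; [by rewrite !expn0 | rewrite leq_exp2r //; lia].
Qed.

Lemma card_bigcup_le (I T : finType) (P : pred I) (F : I -> {set T}) :
  (#|\bigcup_(i | P i) F i| <= \sum_(i | P i) #|F i|)%N.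
Proof.
apply: (big_rec2 (fun (X : {set T}) m => #|X| <= m)%N); first by rewrite cards0.
move=> i X m _ h; rewrite cardsU; lia.
Qed.

Lemma count_card (T : finType) (A : {pred T}) (P : pred T) :
  count P (enum A) = #|[set x in A | P x]|.
Proof.
rewrite -sum1_count big_enum_cond -sum1_card; apply: eq_bigl => x; by rewrite !inE.
Qed.

Lemma exp_mono m1 m2 e : (m1 <= m2)%N -> (m1 ^ e <= m2 ^ e)%N.
Proof. move=> h; elim: e => [|e IH]; rewrite ?expn0 // !expnS leq_mul //. Qed.
Section Young.
Variable n : nat.
Definition Lo : {set cell n} := [set c : cell n | nat_of_ord c.1 != 0%N].

Lemma card_row (a : 'I_n) (P : pred 'I_n) :
  #|[set d : cell n | (d.1 == a) && P d.2]| = #|[set j | P j]|.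
Proof.
transitivity #|[set (a, j) | j in [set j | P j]]|; last by apply: card_imset => x y [].
apply: eq_card => -[x y]; rewrite !inE /=.
apply/andP/imsetP => [[/eqP -> Py]|[j]]; first by exists y; rewrite ?inE.
by rewrite inE => Pj [-> ->]; rewrite eqxx.
Qed.

Lemma young_row0 (D : {set cell n}) (c : cell n) : is_young D -> (c.1 : nat) = 0%N ->
  (c \in D) = (c.2 < #|D :\: Lo|)%N.
Proof.
move=> /forallP hY h0.
have hY' : forall x y : cell n, x \in D -> (y.1 <= x.1)%N -> (y.2 <= x.2)%N -> y \in D.
  move=> x y xD h1 h2; have := hY x; rewrite xD /= => /forallP /(_ y).
  by rewrite h1 h2.
apply/idP/idP.
- move=> cD.
  have : [set d : cell n | (d.1 == c.1) && (d.2 < c.2.+1)%N] \subset D :\: Lo.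
    apply/subsetP => d; rewrite !inE => /andP[/eqP d1 d2]; rewrite d1 h0 eqxx /=.
    by apply: hY' cD _ _; rewrite ?d1.
  move/subset_leq_card; rewrite (card_row c.1 (fun j => j < c.2.+1)%N) (card_set_lt n c.2.+1).
  move=> h; apply: leq_trans _ h; by rewrite leq_min leqnn ltn_ord.
- apply: contraLR => cD; rewrite -leqNgt.
  have : D :\: Lo \subset [set d : cell n | (d.1 == c.1) && (d.2 < c.2)%N].
    apply/subsetP => d; rewrite !inE negbK => /andP[d0 dD].
    have -> : d.1 == c.1 by apply/eqP/val_inj; rewrite /= h0; apply/eqP.
    rewrite /= ltnNge; apply: contra cD => h; apply: hY' dD _ h; rewrite h0; lia.
  by move/subset_leq_card; rewrite (card_row c.1 (fun j => j < c.2)%N) (card_set_lt n c.2) => h; apply: leq_trans h _; exact: geq_minl.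
Qed.

Lemma young_eq (D D' : {set cell n}) : is_young D -> is_young D' ->
  D :&: Lo = D' :&: Lo -> #|D| = #|D'| -> D = D'.
Proof.
move=> hY hY' hI hC.
have hZ : #|D :\: Lo| = #|D' :\: Lo|.
  by move: hC; rewrite -(cardsID Lo D) -(cardsID Lo D') hI; lia.
apply/setP => c; case: (boolP (c \in Lo)) => cL.
  by move/setP: hI => /(_ c); rewrite !in_setI cL !andbT.
have c0 : (c.1 : nat) = 0%N by move: cL; rewrite inE negbK => /eqP.
by rewrite (young_row0 D c hY c0) (young_row0 D' c hY' c0) hZ.
Qed.
End Young.

Section Tab.
Variable n : nat.
Variables lam al : seq nat.
Local Notation p := (size al).
Implicit Type T : {ffun 'I_p.+1 -> {set cell n}}.

Lemma tab_step T : is_ribbon_tableau lam T ->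
  forall k : 'I_p, T (inord k) \subset T (inord k.+1).
Proof. by case/and4P=> _ _ _ /forallP h k; case/and3P: (h k). Qed.

Lemma tab0 T : is_ribbon_tableau lam T -> T ord0 = set0.
Proof. by case/and4P => /eqP. Qed.

Lemma tabmax T : is_ribbon_tableau lam T -> T ord_max = diagram n lam.
Proof. by case/and4P => _ /eqP. Qed.

Lemma tab_young T (i : 'I_p.+1) : is_ribbon_tableau lam T -> is_young (T i).
Proof. by case/and4P => _ _ /forallP. Qed.

Lemma tab_rsize T (k : 'I_p) : is_ribbon_tableau lam T ->
  #|ribbon_of T k| = nth 0 al k.
Proof. by case/and4P=> _ _ _ /forallP h; case/and3P: (h k) => _ _ /eqP. Qed.

Lemma tab_mono T : is_ribbon_tableau lam T ->
  forall i j : 'I_p.+1, (i <= j)%N -> T i \subset T j.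
Proof.
move=> hT.
have H : forall k, (k <= p)%N -> forall i, (i <= k)%N -> T (inord i) \subset T (inord k).
  elim=> [|k IH] hk i hi; first by have -> : i = 0%N by lia.
  case: (ltnP i k.+1) => hik; last by have -> : i = k.+1 by lia.
  have h1 : T (inord i) \subset T (inord k) by apply: IH; lia.
  apply: subset_trans h1 _; exact: (tab_step T hT (Ordinal hk)).
move=> i j hij; rewrite -(inord_val i) -(inord_val j); apply: H => //.
by rewrite -ltnS; exact: ltn_ord.
Qed.

Definition lab T (c : cell n) := #|[set i : 'I_p.+1 | c \notin T i]|.

Lemma labP T c (i : 'I_p.+1) : is_ribbon_tableau lam T ->
  (c \in T i) = (lab T c <= i)%N.
Proof.
move=> hT; apply/idP/idP.
- move=> ci; rewrite /lab.
  apply: leq_trans (subset_leq_card (_ : _ \subset [set k : 'I_p.+1 | (k < i)%N])) _.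
    apply/subsetP => k; rewrite !inE ltnNge; apply: contra => ik.
    exact: (subsetP (tab_mono T hT i k ik) c ci).
  by rewrite (card_set_lt p.+1 i) geq_minl.
- apply: contraLR; rewrite -ltnNge => ci.
  have : [set k : 'I_p.+1 | (k < i.+1)%N] \subset [set k | c \notin T k].
    apply/subsetP => k; rewrite !inE ltnS => ki; apply: contra ci => ck.
    exact: (subsetP (tab_mono T hT k i ki)).
  move/subset_leq_card; rewrite (card_set_lt p.+1 i.+1); move=> h; apply: leq_trans _ h; by rewrite leq_min leqnn ltn_ord.
Qed.

Lemma lab_ge1 T c : is_ribbon_tableau lam T -> (1 <= lab T c)%N.
Proof. move=> hT; have := labP T c ord0 hT; rewrite (tab0 T hT) inE /=; lia. Qed.

Lemma lab_le T c : is_ribbon_tableau lam T -> c \in diagram n lam -> (lab T c <= p)%N.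
Proof. by move=> hT; rewrite -(tabmax T hT) (labP T c ord_max hT). Qed.

Lemma in_ribbon T c j : is_ribbon_tableau lam T -> (j < p)%N ->
  (c \in ribbon_of T j) = (lab T c == j.+1).
Proof.
move=> hT hj; rewrite /ribbon_of !inE !(labP T c _ hT) !inordK; [|lia|lia].
by rewrite -ltnNge eqn_leq andbC.
Qed.

Lemma tab_card T k : is_ribbon_tableau lam T -> (k <= p)%N ->
  #|T (inord k)| = (\sum_(j < k) nth 0 al j)%N.
Proof.
move=> hT; elim: k => [|k IH] hk.
  have -> : inord 0 = ord0 :> 'I_p.+1 by apply: val_inj; rewrite /= inordK.
  by rewrite (tab0 T hT) cards0 big_ord0.
rewrite big_ord_recr /= -IH; last lia.
have hs := tab_step T hT (Ordinal hk); have hr := tab_rsize T (Ordinal hk) hT.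
rewrite /ribbon_of /= in hr hs.
rewrite -hr cardsD (setIidPr hs); by rewrite subnKC // subset_leq_card.
Qed.



Definition lowL : {set cell n} := [set c in diagram n lam | nat_of_ord c.1 != 0%N].

Definition enc T : {ffun cell n -> 'I_p.+1} :=
  [ffun c => if c \in lowL then inord (lab T c).-1 else ord0].

Lemma lowL_diag c : c \in lowL -> c \in diagram n lam.
Proof. by rewrite inE => /andP[]. Qed.

Lemma enc_lab T c : is_ribbon_tableau lam T -> c \in lowL ->
  nat_of_ord (enc T c) = (lab T c).-1.
Proof.
move=> hT cL; rewrite ffunE cL inordK //.
have := lab_le T c hT (lowL_diag c cL); lia.
Qed.

Lemma sub_diag T (i : 'I_p.+1) c : is_ribbon_tableau lam T -> c \in T i -> c \in diagram n lam.
Proof.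
move=> hT ci; rewrite -(tabmax T hT); apply: (subsetP (tab_mono T hT i ord_max _)) ci.
by rewrite /= -ltnS.
Qed.

Lemma enc_inj T T' : is_ribbon_tableau lam T -> is_ribbon_tableau lam T' ->
  enc T = enc T' -> T = T'.
Proof.
move=> hT hT' he.
have hl : forall c, c \in lowL -> lab T c = lab T' c.
  move=> c cL; have : nat_of_ord (enc T c) = enc T' c by rewrite he.
  rewrite (enc_lab T c hT cL) (enc_lab T' c hT' cL).
  have := lab_ge1 T c hT; have := lab_ge1 T' c hT'; lia.
apply/ffunP => i; apply: young_eq; [exact: tab_young|exact: tab_young| |].
- apply/setP => c; rewrite !in_setI; case cL: (c \in Lo n); rewrite ?andbF // !andbT.
  case cD: (c \in diagram n lam).
    have cL' : c \in lowL by rewrite inE cD; move: cL; rewrite inE.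
    by rewrite (labP T c i hT) (labP T' c i hT') hl.
  apply/idP/idP => ci.
    by move: (sub_diag T i c hT ci); rewrite cD.
  by move: (sub_diag T' i c hT' ci); rewrite cD.
- have hi : (i <= p)%N by rewrite -ltnS.
  by rewrite -(inord_val i) !tab_card.
Qed.


Variable mu : seq nat.
Variable s : nat -> nat.
Local Notation skew := (lower_skew n lam mu).

Definition Lmu : {set cell n} := lowL :&: diagram n mu.
Definition B (i : nat) : {set 'I_p.+1} := [set x : 'I_p.+1 | nth 0 al x == i].
Definition WT T : {set 'I_p.+1} :=
  [set x : 'I_p.+1 | (2 <= nth 0 al x)%N && (ribbon_of T x :&: skew != set0)].
Definition Fam (W : {set 'I_p.+1}) (c : cell n) : {set 'I_p.+1} :=
  if c \in Lmu then B 1 else if c \in skew then W else [set ord0].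

Lemma skew_lowL : skew = lowL :\: diagram n mu.
Proof.
apply/setP => c; rewrite !inE.
by rewrite andbA.
Qed.

Lemma widen_card i (Q : nat -> bool) : i != 0%N ->
  #|[set x : 'I_p.+1 | (nth 0 al x == i) && Q x]| =
  #|[set j : 'I_p | (nth 0 al j == i) && Q j]|.
Proof.
move=> i0.
have winj : injective (widen_ord (leqnSn p)) by move=> x y /(congr1 val) /= /val_inj.
transitivity #|[set widen_ord (leqnSn p) j | j in [set j : 'I_p | (nth 0 al j == i) && Q j]]|; last exact: card_imset.
apply: eq_card => x; rewrite !inE.
apply/idP/imsetP.
- case/andP => hx hQ.
  have xp : (x < p)%N.
    rewrite ltnNge; apply/negP => h; move: hx; rewrite nth_default //; lia.
  exists (Ordinal xp); first by rewrite inE hx hQ.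
  exact: val_inj.
- by case=> j; rewrite inE => hj ->.
Qed.

Lemma enc_fam T : T \in S_set n lam al mu s -> enc T \in family (Fam (WT T)).
Proof.
rewrite inE => /and3P [hT /eqP hmu _].
apply/familyP => c; rewrite /Fam.
case: ifP => cLm.
  have cL : c \in lowL by move: cLm; rewrite in_setI => /andP[].
  have : c \in diagram n mu by move: cLm; rewrite in_setI => /andP[].
  rewrite -hmu => /bigcupP [j hj cr].
  rewrite (in_ribbon T c j hT (ltn_ord j)) in cr.
  by rewrite inE (enc_lab T c hT cL) (eqP cr).
case: ifP => cS.
  have cL : c \in lowL by move: cS; rewrite skew_lowL in_setD => /andP[].
  have h1 := lab_ge1 T c hT; have h2 := lab_le T c hT (lowL_diag c cL).
  have hj : ((lab T c).-1 < p)%N by lia.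
  have cr : c \in ribbon_of T (lab T c).-1 by rewrite (in_ribbon T c _ hT hj); apply/eqP; lia.
  rewrite inE (enc_lab T c hT cL); apply/andP; split; last first.
    by apply/set0Pn; exists c; rewrite in_setI cr cS.
  have hs := tab_rsize T (Ordinal hj) hT; rewrite /= in hs.
  have : (0 < #|ribbon_of T (lab T c).-1|)%N by apply/card_gt0P; exists c.
  rewrite hs => hpos.
  case: (ltngtP (nth 0 al (lab T c).-1) 1) => // h; first lia.
  have : c \in diagram n mu.
    rewrite -hmu; apply/bigcupP; exists (Ordinal hj) => //=; by rewrite h.
  by move: cS; rewrite skew_lowL in_setD => /andP[/negP].
have cL : c \notin lowL.
  apply/negP => cL; move: cLm cS; rewrite skew_lowL in_setI in_setD cL.
  by case: (c \in diagram n mu).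
by rewrite ffunE (negbTE cL) inE.
Qed.

Definition Wset K : {set {set 'I_p.+1}} :=
  [set W | [forall i : 'I_K.+1, (2 <= i)%N ==> (#|W :&: B i| == s i)] &&
           (W \subset \bigcup_(i : 'I_K.+1 | (2 <= i)%N) B i)].

Lemma WT_in T : T \in S_set n lam al mu s ->
  (forall i, (#|skew| < i)%N -> s i = 0%N) -> WT T \in Wset #|skew|.
Proof.
rewrite inE => /and3P [hT _ /asboolP hs] hz.
rewrite inE; apply/andP; split.
  apply/forallP => i; apply/implyP => hi.
  rewrite -(hs i hi) -(widen_card i (fun j => ribbon_of T j :&: skew != set0)); last lia.
  apply/eqP; apply: eq_card => x; rewrite !inE.
  case: (eqVneq (nth 0 al x) i) => [->|]; rewrite ?hi ?andbF ?andbT //=.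
apply/subsetP => x; rewrite inE => /andP [h2 hne].
set i := nth 0 al x in h2 hne.
have hiK : (i <= #|skew|)%N.
  rewrite leqNgt; apply/negP => /hz hs0.
  have xp : (x < p)%N.
    rewrite ltnNge; apply/negP => h; move: h2; rewrite /i nth_default //.
  move: (hs i h2); rewrite hs0.
  move/eqP; rewrite cards_eq0 => /eqP /setP /(_ (Ordinal xp)).
  by rewrite !inE /= -/i eqxx hne.
apply/bigcupP; exists (inord i); first by rewrite inordK.
by rewrite inE inordK.
Qed.


Lemma skew_notLmu c : c \in skew -> c \notin Lmu.
Proof. by rewrite skew_lowL in_setD in_setI; case: (c \in diagram n mu); rewrite ?andbF. Qed.

Lemma card_fam W : #|family (Fam W)| = (#|B 1| ^ #|Lmu| * #|W| ^ #|skew|)%N.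
Proof.
rewrite card_family foldrE big_map big_enum /=.
rewrite (bigID (fun c => c \in Lmu)) /=.
congr (_ * _)%N.
  rewrite -prod_nat_const; apply: eq_bigr => c h; by rewrite /Fam h.
rewrite (bigID (fun c => c \in skew)) /= [X in (_ * X)%N]big1 ?muln1; last first.
  by move=> c /andP[h1 h2]; rewrite /Fam (negbTE h1) (negbTE h2) cards1.
rewrite -prod_nat_const; apply: eq_big => c.
  by case: (boolP (c \in skew)) => h; rewrite ?andbF ?andbT // skew_notLmu.
by move=> /andP[h1 h2]; rewrite /Fam (negbTE h1) h2.
Qed.

Lemma Wcard K W : W \in Wset K -> (\sum_(2 <= i < K.+1) i * s i)%N = K -> (#|W| <= K)%N.
Proof.
rewrite inE => /andP [/forallP hf hsub] hsum.
have : W \subset \bigcup_(i : 'I_K.+1 | (2 <= i)%N) (W :&: B i).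
  apply/subsetP => x xW; have := subsetP hsub x xW; case/bigcupP => i hi xB.
  by apply/bigcupP; exists i; rewrite // in_setI xW xB.
move/subset_leq_card => h; apply: leq_trans h _; apply: leq_trans (card_bigcup_le _ _ _ _) _.
apply: leq_trans (_ : _ <= \sum_(i < K.+1 | (2 <= i)%N) i * s i)%N _.
  apply: leq_sum => i hi; rewrite (eqP (implyP (hf i) hi)); apply: leq_pmull; lia.
rewrite big_geq_mkord in hsum; apply: leq_trans (eq_leq hsum).
apply: eq_leq; by apply: eq_bigl.
Qed.

Definition gW K (W : {set 'I_p.+1}) : {ffun 'I_K.+1 -> {set 'I_p.+1}} :=
  [ffun i : 'I_K.+1 => if (2 <= i)%N then W :&: B i else set0].
Definition Dr K (i : 'I_K.+1) : {set {set 'I_p.+1}} :=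
  if (2 <= i)%N then [set V : {set 'I_p.+1} | V \subset B i & #|V| == s i] else [set set0].

Lemma card_Wset K : (#|Wset K| <= \prod_(i < K.+1 | (2 <= i)%N) 'C(#|B i|, s i))%N.
Proof.
have inj : {in Wset K &, injective (gW K)}.
  move=> W W' hW hW' e; apply/setP => x.
  have key : forall V, V \in Wset K ->
      (x \in V) = [exists i : 'I_K.+1, (2 <= i)%N && (x \in gW K V i)].
    move=> V; rewrite inE => /andP[_ hsub]; apply/idP/existsP.
      move=> xV; have := subsetP hsub x xV; case/bigcupP => i hi xB.
      by exists i; rewrite hi ffunE hi in_setI xV xB.
    by case=> i /andP[hi]; rewrite ffunE hi in_setI => /andP[].
  by rewrite (key W hW) (key W' hW') e.
rewrite -(card_in_imset inj).
apply: leq_trans (subset_leq_card (_ : _ \subset [set h in family (Dr K)])) _.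
  apply/subsetP => h /imsetP [W hW ->]; rewrite inE; apply/familyP => i.
  rewrite /Dr ffunE; case: ifP => hi; last by rewrite inE.
  move: hW; rewrite inE => /andP [/forallP hf _].
  by rewrite inE subsetIr /=; exact: (implyP (hf i) hi).
rewrite cardsE card_family foldrE big_map big_enum /= [X in (_ <= X)%N]big_mkcond /=.
apply: eq_leq; apply: eq_bigr => i _; rewrite /Dr; case: ifP => _.
  exact: cards_draws.
exact: cards1.
Qed.

Lemma card_S_le :
  (forall i, (#|skew| < i)%N -> s i = 0%N) ->
  (\sum_(2 <= i < #|skew|.+1) i * s i)%N = #|skew| ->
  (#|S_set n lam al mu s| <= #|Wset #|skew| | * (#|B 1| ^ #|Lmu| * #|skew| ^ #|skew|))%N.
Proof.
move=> hz hsum.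
have injS : {in S_set n lam al mu s &, injective enc}.
  move=> T T' hT hT'; apply: enc_inj.
    by move: hT; rewrite inE => /and3P[].
  by move: hT'; rewrite inE => /and3P[].
rewrite -(card_in_imset injS).
apply: leq_trans (subset_leq_card (_ : _ \subset
   \bigcup_(W in Wset #|skew|) [set f in family (Fam W)])) _.
  apply/subsetP => f /imsetP [T hT ->]; apply/bigcupP; exists (WT T).
    exact: WT_in.
  by rewrite inE; exact: enc_fam.
apply: leq_trans (card_bigcup_le _ _ _ _) _.
rewrite -sum_nat_const; apply: leq_sum => W hW.
rewrite cardsE card_fam leq_mul2l; apply/orP; right.
by apply: exp_mono; apply: Wcard.
Qed.

End Tab.

Lemma card_rows n (g : nat -> nat) (P : pred nat) :
  #|[set c : cell n | (c.2 < g c.1)%N && P c.1]| = (\sum_(i < n | P i) minn (g i) n)%N.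
Proof.
rewrite card_setP -(pair_bigA _ (fun (i j : 'I_n) => ((j < g i)%N && P i : nat))) /=.
rewrite [RHS]big_mkcond; apply: eq_bigr => i _; case: (P i).
  rewrite -sum_lt; apply: eq_bigr => j _; by rewrite andbT.
by apply: big1 => j _; rewrite andbF.
Qed.

Lemma card_lowL n lam : is_partition n lam -> (0 < n)%N ->
  (#|lowL n lam| = n - nth 0 lam 0)%N.
Proof.
case/and3P => _ hpos /eqP hsum hn.
have hle : forall i, (nth 0 lam i <= n)%N by move=> i; rewrite -hsum nth_le_sumn.
have -> : lowL n lam = [set c : cell n | (c.2 < nth 0 lam c.1)%N && (c.1 != 0%N :> nat)].
  by apply/setP => c; rewrite !inE.
rewrite (card_rows n (fun i => nth 0 lam i) (fun i => i != 0%N)).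
have e : (\sum_(i < n | i != 0%N :> nat) minn (nth 0 lam i) n = \sum_(i < n | i != Ordinal hn) nth 0 lam i)%N.
  apply: eq_big => i; first by [].
  by move=> _; rewrite (minn_idPl (hle i)).
rewrite e.
have : (\sum_(i < n) nth 0 lam i)%N = n.
  by rewrite sum_nth // -hsum size_le_sumn.
rewrite (bigD1 (Ordinal hn)) //= => h; rewrite -[in RHS]h; by rewrite addKn.
Qed.

Lemma cardB al i : i != 0%N -> #|B al i| = count_mem i al.
Proof.
move=> i0.
transitivity #|[set x : 'I_(size al).+1 | (nth 0 al x == i) && true]|.
  by apply: eq_card => x; rewrite !inE andbT.
rewrite (widen_card al i (fun _ => true)) // card_setP.
rewrite -sum1_count (big_nth 0) big_mkord [RHS]big_mkcond.
apply: eq_bigr => j _; rewrite andbT /=; by case: (_ == _).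
Qed.

Lemma count_cyc n (sigma : {perm 'I_n}) i : count_mem i (cycle_type_inc sigma) = fcyc sigma i.
Proof.
rewrite /cycle_type_inc count_sort count_map count_card /fcyc.
by apply: eq_card => c; rewrite !inE.
Qed.

Local Open Scope ring_scope.

Lemma ge_bigmax (R : realType) (m k : nat) (F : nat -> R) i : (m <= i < k)%N ->
  F i <= \big[Num.max/0]_(m <= j < k) F j.
Proof. move=> h; apply: le_bigmax_seq => //; by rewrite mem_index_iota. Qed.

Lemma fcyc_pow (R : realType) n (sigma : {perm 'I_n}) i : (0 < i)%N ->
  (fcyc sigma i)%:R = (((fcyc sigma i)%:R : R) `^ (i%:R)^-1) ^+ i.
Proof.
move=> hi; rewrite -powR_mulrn ?powR_ge0 // -powRrM mulVf ?powRr1 ?ler0n //.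
by rewrite pnatr_eq0; lia.
Qed.

Lemma expr_mono (R : realType) (a b : R) k : 0 <= a -> a <= b -> a ^+ k <= b ^+ k.
Proof. move=> ha hab; apply: lerXn2r; rewrite ?nnegrE //; exact: le_trans hab. Qed.

Theorem lemma2p10 (R : realType) (r : nat) (hr : (1 <= r)%N) :
  exists C : R,
  forall (n : nat) (lam : seq nat) (sigma : {perm 'I_n}) (mu : seq nat)
         (s : nat -> nat),
    (3 * r <= n)%N ->
    is_partition n lam ->
    (n - nth 0 lam 0)%N = r ->
    (2 * r <= fcyc sigma 1)%N ->
    is_partition (fcyc sigma 1) mu ->
    subpart mu lam ->
    (2 <= #|lower_skew n lam mu|)%N ->
    (forall i, (#|lower_skew n lam mu| < i)%N -> s i = 0%N) ->
    (\sum_(2 <= i < #|lower_skew n lam mu|.+1) i * s i)%N = #|lower_skew n lam mu| ->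
    let f := fcyc sigma 1 in
    let K := #|lower_skew n lam mu| in
    (#|S_set n lam (cycle_type_inc sigma) mu s|%:R
       <= C * f%:R ^+ (r - K) * Gstat R sigma ^+ K)
    /\ (C * f%:R ^+ (r - K) * Gstat R sigma ^+ K <= C * Mstat R sigma ^+ r).
Proof.
exists ((r ^ r)%N%:R).
move=> n lam sigma mu s h3r hlam hr0 hf hmu hsub hK2 hz hsum f K.
set al := cycle_type_inc sigma.
have hn : (0 < n)%N by lia.
have hlow := card_lowL n lam hlam hn; rewrite hr0 in hlow.
have hsplit : (#|Lmu n lam mu| + K)%N = r.
  by rewrite /K skew_lowL -hlow /Lmu cardsID.
have hKr : (K <= r)%N by lia.
have hLmu : #|Lmu n lam mu| = (r - K)%N by lia.
have hB1 : #|B al 1| = f by rewrite cardB // count_cyc.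
set G := Gstat R sigma; set M := Mstat R sigma.
set h := fun i : nat => ((fcyc sigma i)%:R : R) `^ (i%:R)^-1.
have hG : forall i, (2 <= i <= n)%N -> (fcyc sigma i)%:R <= G ^+ i.
  move=> i hi; rewrite (@fcyc_pow R n sigma i); last lia.
  apply: expr_mono; first exact: powR_ge0.
  apply: (@ge_bigmax R 2 n.+1 (fun j => ((fcyc sigma j)%:R : R) `^ (j%:R)^-1) i); lia.
have G0 : 0 <= G.
  apply: le_trans (powR_ge0 ((fcyc sigma 2)%:R : R) (2%:R)^-1) _.
  apply: (@ge_bigmax R 2 n.+1 (fun j => ((fcyc sigma j)%:R : R) `^ (j%:R)^-1) 2); lia.
have fM : (f%:R : R) <= M.
  have -> : (f%:R : R) = h 1%N by rewrite /h invr1 powRr1 ?ler0n.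
  apply: (@ge_bigmax R 1 n.+1 (fun j => ((fcyc sigma j)%:R : R) `^ (j%:R)^-1) 1); lia.
have GM : G <= M by apply: le_bigmax_nat.
have hnat : (#|S_set n lam al mu s| <=
    (\prod_(i < K.+1 | (2 <= i)%N) fcyc sigma i ^ s i) * (f ^ (r - K) * r ^ r))%N.
  apply: leq_trans (card_S_le n lam al mu s hz hsum) _.
  apply: leq_mul.
    apply: leq_trans (card_Wset al s K) _; apply: leq_prod => i hi.
    rewrite cardB ?count_cyc; last lia.
    exact: bin_le_exp.
  rewrite hB1 hLmu leq_mul2l; apply/orP; right.
  apply: leq_trans (exp_mono _ _ _ hKr) _; exact: leq_pexp2l.
have hprod : \prod_(i < K.+1 | (2 <= i)%N) ((fcyc sigma i)%:R : R) ^+ s i <= G ^+ K.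
  apply: le_trans (_ : _ <= \prod_(i < K.+1 | (2 <= i)%N) G ^+ (i * s i)) _.
    apply: ler_prod => i hi; rewrite exprn_ge0 ?ler0n //= exprM.
    apply: expr_mono; first exact: ler0n.
    apply: hG; have := ltn_ord i; lia.
  rewrite prodrXr.
  have -> : (\sum_(i < K.+1 | (2 <= i)%N) i * s i)%N = K.
    rewrite big_geq_mkord in hsum; rewrite -[RHS]hsum; by apply: eq_bigl.
  by [].
split.
- apply: le_trans (_ : _ <= ((\prod_(i < K.+1 | (2 <= i)%N) fcyc sigma i ^ s i) *
     (f ^ (r - K) * r ^ r))%N%:R) _; first by rewrite ler_nat.
  rewrite natrM natr_prod natrM !natrX.
  under eq_bigr do rewrite natrX.
  have -> : r%:R ^+ r * f%:R ^+ (r - K) * G ^+ K =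
      G ^+ K * (f%:R ^+ (r - K) * (r%:R ^+ r)) :> R by ring.
  apply: ler_wpM2r; last exact: hprod.
  by rewrite mulr_ge0 ?exprn_ge0 ?ler0n.
- rewrite -!mulrA; apply: ler_wpM2l; first exact: ler0n.
  have -> : M ^+ r = M ^+ (r - K) * M ^+ K by rewrite -exprD subnK.
  apply: ler_pM; rewrite ?exprn_ge0 ?ler0n //; apply: expr_mono => //; exact: ler0n.
Qed.
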